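(* Let $k\ge 2$ and $j\ge 0$, $n\ge 0$ be integers, and consider the random $k$-tree process. Suppose that in $G(j)$ a vertex $x$ has $A>0$ neighbors and is contained in $B$ many $k$-cliques. Conditional on this, the degree of $x$ in $G(n+j)$ is distributed as $$A+\frac{1}{k-1}\left(\operatorname{Urn}\left(B,\,kj+1-B,\,\begin{bmatrix}k&0\\1&k-1\end{bmatrix},\,n\right)-B\right).$$
   Context: Random $k$-tree process: $G(0)$ is a clique on $k$ vertices; for $t\ge1$, $G(t)$ is obtained from $G(t-1)$ by choosing a $k$-clique of $G(t-1)$ uniformly at random, creating a new vertex, and joining it to all vertices of the chosen clique ($G(t)$ has $kt+1$ many $k$-cliques). Generalized Pólya–Eggenberger urn: for nonnegative integers $\alpha,\beta,\gamma,\delta$, start with $W_0$ white and $B_0$ black balls; in each step a ball is drawn uniformly at random and returned; if it is white, $\delta$ white and $\gamma$ black balls are added; if it is black, $\beta$ white and $\alpha$ black balls are added. $\operatorname{Urn}\left(W_0,B_0,\begin{bmatrix}\alpha&\beta\\\gamma&\delta\end{bmatrix},n\right)$ denotes the number of white balls right after $n$ draws. *)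

(* Defs.v *)
From mathcomp Require Import all_boot all_order all_algebra.
Set Implicit Arguments. Unset Strict Implicit. Unset Printing Implicit Defensive.
Import Order.TTheory GRing.Theory Num.Theory.
Local Open Scope ring_scope.

(* A graph on vertex set {0,..,N-1} with adjacency relation adj. *)
Record graph := Graph { nverts : nat; adj : nat -> nat -> bool }.

Fixpoint ksubs (s : seq nat) (m : nat) : seq (seq nat) :=
  match s with
  | [::] => if m is 0 then [:: [::]] else [::]
  | x :: s' => if m is m'.+1 then map (cons x) (ksubs s' m') ++ ksubs s' m
               else [:: [::]]
  end.

Definition is_clique (G : graph) (C : seq nat) : bool :=
  all (fun u => all (fun v => (u == v) || adj G u v) C) C.

(* The k-cliques of G (each listed once, as a sorted list of k vertices). *)
Definition kcliques (k : nat) (G : graph) : seq (seq nat) :=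
  [seq C <- ksubs (iota 0 (nverts G)) k | is_clique G C].

Definition add_vertex (G : graph) (C : seq nat) : graph :=
  Graph (nverts G).+1
    (fun u v => [|| adj G u v, (u == nverts G) && (v \in C)
                  | (v == nverts G) && (u \in C)]).

Definition kclique_graph (k : nat) : graph :=
  Graph k (fun u v => [&& (u < k)%N, (v < k)%N & u != v]).

Definition degree (G : graph) (x : nat) : nat :=
  count (adj G x) (iota 0 (nverts G)).

Definition nb_cliques_containing (k : nat) (G : graph) (x : nat) : nat :=
  count (fun C => x \in C) (kcliques k G).

(* Probability that the trajectory (G(0), G(1), ..., G(n)) of the random
   k-tree process started from G satisfies P: at each step a k-clique
   of the current graph is chosen uniformly at random. *)
Fixpoint ktree_prob (k n : nat) (G : graph) (P : seq graph -> bool) : rat :=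
  match n with
  | 0 => (P [:: G])%:R
  | n'.+1 =>
      let cs := kcliques k G in
      (size cs)%:R^-1 *
      \sum_(C <- cs) ktree_prob k n' (add_vertex G C) (fun tr => P (G :: tr))
  end.

Definition Pr_ktree (k T : nat) (P : seq graph -> bool) : rat :=
  ktree_prob k T (kclique_graph k) P.

(* Generalized Polya-Eggenberger urn with replacement matrix
   [[alpha, beta]; [gamma, delta]]: probability that the number of white
   balls after n draws, starting from W white and B black, satisfies P. *)
Fixpoint urn_prob (alpha beta gamma delta : nat) (n W B : nat)
    (P : nat -> bool) : rat :=
  match n with
  | 0 => (P W)%:R
  | n'.+1 =>
      (W%:R / (W + B)%:R) * urn_prob alpha beta gamma delta n' (W + delta) (B + gamma) P
    + (B%:R / (W + B)%:R) * urn_prob alpha beta gamma delta n' (W + beta) (B + alpha) P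
  end.

(* Main.v *)
Require Import Defs.
From mathcomp Require Import all_boot all_order all_algebra.
From mathcomp Require Import zify.
Import Order.TTheory GRing.Theory Num.Theory.
Set Implicit Arguments. Unset Strict Implicit. Unset Printing Implicit Defensive.
Lemma ksubs0 s : ksubs s 0 = [:: [::]].
Proof. by case: s. Qed.

Lemma ksubs_sub s m S : S \in ksubs s m -> subseq S s && (size S == m).
Proof.
elim: s m S => [|y s IH] [|m] S.
- by rewrite ksubs0 inE => /eqP->.
- by rewrite [ksubs _ _]/= in_nil.
- by rewrite ksubs0 inE => /eqP->; rewrite sub0seq.
- rewrite [ksubs _ _]/= mem_cat => /orP[/mapP[S' HS' ->]|HS].
    by have /andP[H1 H2] := IH _ _ HS'; rewrite /= eqxx H1.
  have /andP[H1 H2] := IH _ _ HS; rewrite H2 andbT.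
  exact: (subseq_trans H1 (subseq_cons s y)).
Qed.

Lemma count_ksubs (a : pred nat) s m :
  count (fun S => all a S) (ksubs s m) = 'C(count a s, m).
Proof.
elim: s m => [|y s IH] [|m] //=; rewrite ?ksubs0 ?bin0 //.
rewrite count_cat count_map /= IH.
have ->: count (fun S => a y && all a S) (ksubs s m) = a y * count (fun S => all a S) (ksubs s m).
  case: (a y) => /=; rewrite ?mul1n // mul0n; exact: count_pred0.
rewrite (IH m); case: (a y) => /=; rewrite ?mul1n ?mul0n ?add0n //.
by rewrite binS addnC.
Qed.

Lemma ksubs_rcons s y m :
  perm_eq (ksubs (rcons s y) m.+1) (ksubs s m.+1 ++ map (rcons^~ y) (ksubs s m)).
Proof.
elim: s m => [|z s IH] m; first by case: m.
case: m => [|m].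
  rewrite /= !ksubs0 /=.
  have := IH 0%N; rewrite ksubs0 /= => H.
  by rewrite -cat1s -(cat1s [:: z]) perm_cat2l.
rewrite [ksubs (rcons (z :: s) y) _]/= [ksubs (z :: s) _]/=.
rewrite (perm_trans (perm_cat (perm_map _ (IH m)) (IH m.+1))) //.
rewrite map_cat [ksubs (z :: s) m.+1]/= map_cat -!map_comp.
rewrite (@eq_map _ _ ((rcons^~ y) \o cons z) (cons z \o (rcons^~ y))) //.
by rewrite -!catA perm_cat2l perm_catCA.
Qed.

Definition Inv0 (G : graph) := forall u v, adj G u v -> (u < nverts G) && (v < nverts G).

Lemma iotaSr N : iota 0 N.+1 = rcons (iota 0 N) N.
Proof. by rewrite -addn1 iotaD cats1. Qed.

Lemma cl_props k G C : C \in kcliques k G ->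
  [/\ uniq C, size C = k, all (fun u => u < nverts G) C & is_clique G C].
Proof.
rewrite mem_filter => /andP[Hc /ksubs_sub /andP[Hs /eqP Hz]]; split => //.
- exact: subseq_uniq Hs (iota_uniq _ _).
- apply/allP => u /(mem_subseq Hs); by rewrite mem_iota.
Qed.

Lemma count_mem_iota (C : seq nat) N : uniq C -> all (fun u => u < N) C ->
  count (mem C) (iota 0 N) = size C.
Proof.
move=> HU /allP HA; rewrite -size_filter; apply: perm_size.
apply: uniq_perm => //; first exact: filter_uniq (iota_uniq _ _).
move=> u; rewrite mem_filter mem_iota /=; case HC: (u \in C) => //=.
by rewrite HA.
Qed.

Lemma clique_old G C S : all (fun u => u < nverts G) S ->
  is_clique (add_vertex G C) S = is_clique G S.
Proof.
move=> /allP HS; apply: eq_in_all => u Hu; apply: eq_in_all => v Hv /=.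
by rewrite (ltn_eqF (HS _ Hu)) (ltn_eqF (HS _ Hv)) /= !orbF.
Qed.

Lemma clique_new G C S : Inv0 G -> is_clique G C -> all (fun u => u < nverts G) S ->
  is_clique (add_vertex G C) (rcons S (nverts G)) = all (mem C) S.
Proof.
move=> HI /allP HC /allP HS; apply/idP/idP.
- move=> /allP Hcl; apply/allP => u Hu.
  have := allP (Hcl u _) (nverts G); rewrite !mem_rcons !inE Hu orbT eqxx /=.
  rewrite (ltn_eqF (HS _ Hu)) /= => /(_ isT isT) /orP[H|/andP[_ ->]//].
  by move: (HI _ _ H); rewrite ltnn andbF.
- move=> HSC0. have HSC : forall u, u \in S -> u \in C by move=> u Hu; exact: (allP HSC0 u Hu). apply/allP => u; rewrite mem_rcons inE => Hu.
  apply/allP => v; rewrite mem_rcons inE => Hv /=.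
  case/orP: Hu => [/eqP->|Hu]; case/orP: Hv => [/eqP->|Hv].
  + by rewrite eqxx.
  + by rewrite eqxx (HSC v) //= !orbT.
  + by rewrite eqxx (HSC u) //= !orbT.
  + have /allP := HC _ (HSC _ Hu); move/(_ v (HSC _ Hv)) => /orP[->//|->].
    by rewrite orbT.
Qed.

Lemma all_lt_sub S N m : S \in ksubs (iota 0 N) m -> all (fun u => u < N) S.
Proof.
move=> /ksubs_sub /andP[Hs _]; apply/allP => u /(mem_subseq Hs).
by rewrite mem_iota.
Qed.

Lemma count_step k G C (p : pred (seq nat)) : Inv0 G -> C \in kcliques k.+1 G ->
  count p (kcliques k.+1 (add_vertex G C)) =
  count p (kcliques k.+1 G) +
  count (fun S => all (mem C) S && p (rcons S (nverts G))) (ksubs (iota 0 (nverts G)) k).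
Proof.
move=> HI HC; have [_ _ _ Hcl] := cl_props HC.
rewrite /kcliques !count_filter.
rewrite [nverts (add_vertex G C)]/= iotaSr (permP (ksubs_rcons _ _ _)) count_cat count_map.
congr (_ + _).
- apply: eq_in_count => S /all_lt_sub HS /=; by rewrite clique_old.
- apply: eq_in_count => S /all_lt_sub HS /=; by rewrite clique_new // andbC.
Qed.

Lemma size_step k G C : Inv0 G -> C \in kcliques k.+1 G ->
  size (kcliques k.+1 (add_vertex G C)) = size (kcliques k.+1 G) + k.+1.
Proof.
move=> HI HC; have [HU Hsz HA _] := cl_props HC.
rewrite -!count_predT count_step //; congr (_ + _).
rewrite (eq_count (a2 := fun S => all (mem C) S)); last by move=> S; rewrite andbT.
by rewrite count_ksubs count_mem_iota // Hsz binSn.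
Qed.

Lemma count_split T (a b : pred T) s :
  count a s = count (predI a b) s + count (predI a (predC b)) s.
Proof.
elim: s => //= y s ->; case: (a y) (b y) => [] [] /=; lia.
Qed.

Lemma xcount_step k G C x : Inv0 G -> C \in kcliques k.+1 G -> x < nverts G ->
  count (fun S => x \in S) (kcliques k.+1 (add_vertex G C)) =
  count (fun S => x \in S) (kcliques k.+1 G) + (x \in C) * k.
Proof.
move=> HI HC Hx; have [HU Hsz HA _] := cl_props HC.
rewrite count_step //; congr (_ + _).
rewrite (eq_count (a2 := fun S => all (mem C) S && (x \in S))); last first.
  by move=> S; rewrite mem_rcons inE (ltn_eqF Hx).
case HxC: (x \in C); last first.
  rewrite mul0n; apply/eqP; rewrite -leqn0 leqNgt -has_count; apply/hasPn => S _.
  apply/negP => /andP[/allP H1 H2]; by move: (H1 _ H2); rewrite inE HxC.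
pose C' := filter (predC1 x) C.
have HU' : uniq C' by exact: filter_uniq.
have HA' : all (fun u => u < nverts G) C'.
  by apply/allP => u; rewrite mem_filter => /andP[_ /(allP HA)].
have Hsz' : size C' = k.
  have := count_predC (pred1 x) C; rewrite -/C' size_filter count_uniq_mem // HxC Hsz.
  by rewrite add1n => -[].
have E := count_split (fun S => all (mem C) S) (fun S => x \in S) (ksubs (iota 0 (nverts G)) k).
rewrite count_ksubs count_mem_iota // Hsz binSn in E.
rewrite (eq_count (a1 := predI _ (predC _)) (a2 := fun S => all (mem C') S)) in E; last first.
  move=> S /=; rewrite (eq_all (a1 := mem C') (a2 := predI (predC1 x) (mem C))); last first.
    by move=> u; rewrite /= mem_filter.
  by rewrite all_predI all_predC has_pred1 andbC.
rewrite count_ksubs count_mem_iota // Hsz' binn in E.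
rewrite mul1n; move: E; rewrite addn1 => -[] <-.
by [].
Qed.

Lemma deg_step G C x : Inv0 G -> x < nverts G ->
  degree (add_vertex G C) x = degree G x + (x \in C).
Proof.
move=> HI Hx; rewrite /degree.
change (count (adj (add_vertex G C) x) (iota 0 (nverts G).+1) = count (adj G x) (iota 0 (nverts G)) + (x \in C)).
rewrite iotaSr -cats1 count_cat.
congr (_ + _).
  apply: eq_in_count => v; rewrite mem_iota => /andP[_ Hv].
  by rewrite /= (ltn_eqF Hx) (ltn_eqF Hv) /= !orbF.
rewrite /= addn0.
have -> : adj G x (nverts G) = false.
  by apply/negP => /HI; rewrite ltnn andbF.
by rewrite (ltn_eqF Hx) eqxx.
Qed.

Lemma inv_step k G C : Inv0 G -> C \in kcliques k G -> Inv0 (add_vertex G C).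
Proof.
move=> HI HC; have [_ _ /allP HA _] := cl_props HC.
move=> u v /= /orP[/HI /andP[H1 H2]|/orP[]/andP[/eqP-> Hv]].
- by rewrite !ltnS (ltnW H1) (ltnW H2).
- by rewrite ltnSn /= ltnS (ltnW (HA _ Hv)).
- by rewrite ltnSn andbT ltnS (ltnW (HA _ Hv)).
Qed.

Lemma init_inv k : Inv0 (kclique_graph k).
Proof. by move=> u v /= /and3P[-> ->]. Qed.

Lemma init_size k : size (kcliques k (kclique_graph k)) = 1%N.
Proof.
rewrite /kcliques size_filter (eq_in_count (a2 := predT)); last first.
  move=> S /all_lt_sub /allP HS /=; apply/allP => u Hu; apply/allP => v Hv.
  by case: eqP => //= /eqP ->; rewrite HS // HS.
rewrite count_predT -(count_predT (ksubs _ _)).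
rewrite (eq_count (a2 := fun S => all predT S)); last by move=> S; rewrite all_predT.
by rewrite count_ksubs count_predT size_iota binn.
Qed.

Local Open Scope ring_scope.

Fixpoint ktree_exp (k n : nat) (G : graph) (h : seq graph -> rat) : rat :=
  match n with
  | 0 => h [:: G]
  | n'.+1 => (size (kcliques k G))%:R^-1 *
      \sum_(C <- kcliques k G) ktree_exp k n' (add_vertex G C) (fun tr => h (G :: tr))
  end.

Lemma prob_exp k n G P : ktree_prob k n G P = ktree_exp k n G (fun tr => (P tr)%:R).
Proof.
elim: n G P => [|n IH] G P //=.
congr (_ * _); apply: eq_bigr => C _; exact: IH.
Qed.

Lemma exp_inv k (Inv : nat -> graph -> Prop) :
  (forall t G C, Inv t G -> C \in kcliques k G -> Inv t.+1 (add_vertex G C)) ->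
  forall n t G h1 h2, Inv t G ->
  (forall s, size s = n -> Inv (t + n)%N (last G s) -> h1 (G :: s) = h2 (G :: s)) ->
  ktree_exp k n G h1 = ktree_exp k n G h2.
Proof.
move=> Hs; elim=> [|n IH] t G h1 h2 HG H /=.
  by apply: H => //; rewrite addn0.
congr (_ * _); rewrite big_seq_cond [RHS]big_seq_cond; apply: eq_bigr => C /andP[HC _].
apply: (IH t.+1) => [|s Hsz HI]; first exact: Hs HG HC.
apply: (H (add_vertex G C :: s)); first by rewrite /= Hsz.
by rewrite /= -addSnnS.
Qed.

Lemma exp_ext k n G h1 h2 :
  (forall s, size s = n -> h1 (G :: s) = h2 (G :: s)) ->
  ktree_exp k n G h1 = ktree_exp k n G h2.
Proof.
move=> H; apply: (@exp_inv k (fun _ _ => True) _ n 0%N) => // s Hs _.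
exact: H.
Qed.

Lemma exp_split k j n G h :
  ktree_exp k (j + n) G h =
  ktree_exp k j G (fun tr => ktree_exp k n (last G tr) (fun tr' => h (tr ++ behead tr'))).
Proof.
elim: j G h => [|j IH] G h.
  rewrite add0n /=; exact: exp_ext.
rewrite addSn /=; congr (_ * _); apply: eq_bigr => C _; rewrite IH.
exact: exp_ext.
Qed.

Lemma exp_scale k n G c h : ktree_exp k n G (fun tr => c * h tr) = c * ktree_exp k n G h.
Proof.
elim: n G h => [|n IH] G h //=.
rewrite mulrCA; congr (_ * _); rewrite mulr_sumr; apply: eq_bigr => C _; exact: IH.
Qed.

Lemma sum_if (s : seq (seq nat)) (p : pred (seq nat)) (a b : rat) :
  \sum_(C <- s) (if p C then a else b) = (count p s)%:R * a + (size s - count p s)%:R * b.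
Proof.
elim: s => [|C s IH]; first by rewrite big_nil !mul0r addr0.
rewrite big_cons IH /=; have := count_size p s; case: (p C) => /= Hle.
  rewrite add1n subSS -natr1 mulrDl mul1r. by rewrite addrA (addrC a).
rewrite add0n subSn // -natr1 mulrDl mul1r. by rewrite addrCA (addrC b).
Qed.

Definition xcnt k G x := count (fun S => x \in S) (kcliques k G).

Lemma urn_main K x n : forall G (Q P : pred nat), Inv0 G -> (x < nverts G)%N ->
  (forall m, Q (degree G x + m)%N = P (xcnt K.+1 G x + m * K)%N) ->
  ktree_exp K.+1 n G (fun tr => (Q (degree (last G tr) x))%:R) =
  urn_prob K.+1 0 1 K n (xcnt K.+1 G x) (size (kcliques K.+1 G) - xcnt K.+1 G x) P.
Proof.
elim: n => [|n IH] G Q P HI Hx H.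
  by rewrite /= -(addn0 (degree G x)) H mul0n addn0.
rewrite [LHS]/=.
set T := size (kcliques K.+1 G); set W := xcnt K.+1 G x.
have HWT : (W <= T)%N by apply: count_size.
rewrite big_seq (eq_bigr (fun C => if x \in C then
    urn_prob K.+1 0 1 K n (W + K) (T - W + 1) P else
    urn_prob K.+1 0 1 K n W (T - W + K.+1) P)); last first.
  move=> C HC.
  rewrite (@exp_ext _ _ _ _ (fun tr => (Q (degree (last (add_vertex G C) tr) x))%:R)) //.
  rewrite (IH _ _ P).
  - rewrite /xcnt xcount_step // size_step // -/T -/(xcnt _ _ _) -/W.
    case: (x \in C); rewrite /=.
      by rewrite mul1n; congr urn_prob; lia.
    by rewrite mul0n addn0; congr urn_prob; lia.
  - exact: inv_step HC.
  - by rewrite /= ltnS ltnW.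
  - move=> m; rewrite deg_step // /xcnt xcount_step // -/(xcnt _ _ _) -/W.
    case: (x \in C) => /=.
      have -> : (degree G x + 1 + m = degree G x + m.+1)%N by lia.
      by rewrite H; congr P; lia.
    by rewrite addn0 H; congr P; lia.
rewrite -big_seq sum_if -/W -/T /= addn0 (subnKC HWT).
by rewrite mulrDr !mulrA ![_^-1 * _]mulrC.
Qed.

Lemma sum_one (s : seq (seq nat)) : \sum_(C <- s) (1 : rat) = (size s)%:R.
Proof. elim: s => [|C s IH]; by rewrite ?big_nil ?big_cons ?IH //= -natr1 addrC. Qed.

Definition TInv K (t : nat) (G : graph) :=
  Inv0 G /\ size (kcliques K.+1 G) = (K.+1 * t).+1.

Lemma TInv_step K t G C : TInv K t G -> C \in kcliques K.+1 G -> TInv K t.+1 (add_vertex G C).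
Proof.
move=> [HI Hs] HC; split; first exact: inv_step HC.
by rewrite size_step // Hs mulnS; lia.
Qed.

Lemma exp_one K n : forall t G, TInv K t G -> ktree_exp K.+1 n G (fun _ => 1) = 1.
Proof.
elim: n => [|n IH] t G HG //=.
rewrite big_seq (eq_bigr (fun _ => 1)); last first.
  by move=> C HC; apply: (IH t.+1); exact: TInv_step.
rewrite -big_seq sum_one mulVf // pnatr_eq0; case: HG => _ ->; done.
Qed.

Theorem proposition3 (k j n x A B d : nat) :
  (2 <= k)%N -> (0 < A)%N ->
  let E := fun tr : seq graph =>
    (degree (nth (kclique_graph k) tr j) x == A) &&
    (nb_cliques_containing k (nth (kclique_graph k) tr j) x == B) in
  let F := fun tr : seq graph =>
    degree (nth (kclique_graph k) tr (n + j)) x == d in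
  0 < Pr_ktree k (n + j) E ->
  Pr_ktree k (n + j) (fun tr => E tr && F tr) / Pr_ktree k (n + j) E
  = urn_prob k 0 1 (k - 1)%N n B (k * j + 1 - B)%N
      (fun w => A%:Q + (w%:Q - B%:Q) / (k - 1)%N%:Q == d%:Q).
Proof.
case: k => [|K] // Hk HA E F Hpos.
have HK : (0 < K)%N by [].
have -> : (K.+1 - 1)%N = K by rewrite subn1.
set G0 := kclique_graph K.+1.
set P := (fun w : nat => A%:Q + (w%:Q - B%:Q) / K%:Q == d%:Q).
set U := urn_prob K.+1 0 1 K n B (K.+1 * j + 1 - B) P.
pose e := fun G => (degree G x == A) && (xcnt K.+1 G x == B).
have Hnth1 : forall s s', size s = j -> nth G0 ((G0 :: s) ++ s') j = last G0 s.
  move=> s s' Hs; rewrite nth_cat /= ltnS Hs leqnn.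
  have -> : j = (size (G0 :: s)).-1 by rewrite /= Hs.
  by rewrite nth_last.
have Hnth2 : forall s s', size s = j -> size s' = n ->
    nth G0 ((G0 :: s) ++ s') (n + j) = last (last G0 s) s'.
  move=> s s' Hs Hs'.
  have -> : (n + j = (size ((G0 :: s) ++ s')).-1)%N by rewrite size_cat /= Hs Hs'; lia.
  by rewrite nth_last /= last_cat.
have HTI0 : TInv K 0 G0 by split; [exact: init_inv | rewrite muln0 init_size].
have Hden : Pr_ktree K.+1 (n + j) E =
    ktree_exp K.+1 j G0 (fun tr => (e (last G0 tr))%:R).
  rewrite /Pr_ktree prob_exp addnC exp_split.
  apply: (@exp_inv K.+1 (TInv K) (@TInv_step K) j 0%N) => // s Hs HTI.
  rewrite (@exp_ext _ _ _ _ (fun tr => (e (last G0 s))%:R * 1)).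
    by rewrite exp_scale (exp_one n HTI) mulr1.
  move=> s' Hs'; rewrite /= mulr1 /E Hnth1 //.
have Hnum : Pr_ktree K.+1 (n + j) (fun tr => E tr && F tr) =
    ktree_exp K.+1 j G0 (fun tr => U * (e (last G0 tr))%:R).
  rewrite /Pr_ktree prob_exp addnC exp_split.
  apply: (@exp_inv K.+1 (TInv K) (@TInv_step K) j 0%N) => // s Hs [HI Hsz].
  set Gj := last G0 s.
  rewrite (@exp_ext _ _ _ _ (fun tr => (e Gj)%:R * ((fun w => w == d) (degree (last Gj tr) x))%:R)).
    rewrite exp_scale; case He: (e Gj); last by rewrite !mul0r mulr0.
    move: He => /andP[/eqP HdA /eqP HcB].
    rewrite mul1r mulr1 (@urn_main K x n Gj (fun w => w == d) P) //.
    - rewrite HcB Hsz. by rewrite add0n /U addn1.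
    - move: HA; rewrite -HdA /degree -has_count => /hasP[v _ /HI /andP[]] //.
    - move=> m; rewrite HdA HcB /P. rewrite -!pmulrn natrD natrM addrAC subrr add0r mulfK.
        by rewrite -natrD eqr_nat.
      by rewrite pnatr_eq0 -lt0n.
  move=> s' Hs'; rewrite /= /E /F Hnth1 // Hnth2 //.
  by rewrite /nb_cliques_containing -natrM mulnb.
rewrite Hnum exp_scale -Hden mulfK //.
by apply: lt0r_neq0.
Qed.
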